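(* In the setting described in the context, fix $n$ and a piecewise constant function $\bar u^n\colon\mathbb{R}\to\Omega^n$ (with finitely many jumps) and let $u^n$ be the approximate solution constructed from $\bar u^n$ by the wave-front tracking algorithm with the approximate Riemann solver $\mathcal{R}^n$. Then for every $t>0$, every phase transition performed by $x\mapsto u^n(t,x)$ from $u_-$ to $u_+$ satisfies $(u_-,u_+)\in\mathcal{G}_{\rm e}$. Moreover, the number of phase transitions performed by $x\mapsto u^n(t,x)$, $t\ge0$, does not increase with time, and it strictly decreases if and only if two phase transitions interact. Finally, the number of phase transitions can decrease only by an even number.
   Context: Standing assumptions. Let $R_{\rm f}''>0$ and $v_{\rm f}\in C^2([0,R_{\rm f}''];\mathbb{R}_+)$ with $v_{\rm f}(R_{\rm f}'')>0$ and, for every $\rho\in[0,R_{\rm f}'']$, $v_{\rm f}'(\rho)\le0$, $v_{\rm f}(\rho)+\rho v_{\rm f}'(\rho)>0$, $2v_{\rm f}'(\rho)+\rho v_{\rm f}''(\rho)\le0$. Let $R_{\rm f}'\in\,]0,R_{\rm f}''[$ and $p\in C^2([R_{\rm f}',+\infty[;\mathbb{R})$ with $p'(\rho)>0$, $2p'(\rho)+\rho p''(\rho)>0$ for $\rho\ge R_{\rm f}'$. Assume $\rho\mapsto v_{\rm f}(\rho)+p(\rho)$ is increasing on $[R_{\rm f}',R_{\rm f}'']$ and $v_{\rm f}(\rho)<\rho p'(\rho)$ on $[R_{\rm f}',R_{\rm f}'']$. Set $V_{\max}\doteq v_{\rm f}(0)$, $V_{\rm f}\doteq v_{\rm f}(R_{\rm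 f}'')$, $W_{\max}\doteq p(R_{\rm f}'')+V_{\rm f}$, $W_{\rm c}\doteq p(R_{\rm f}')+v_{\rm f}(R_{\rm f}')$, $W_{\min}\doteq W_{\rm c}+v_{\rm f}(R_{\rm f}')-V_{\max}$, $R_{\max}\doteq p^{-1}(W_{\max})$, and fix $V_{\rm c}\in\,]0,V_{\rm f}[$. Domains. Write $u=(\rho,v)$. $\Omega_{\rm f}\doteq\{u\in[0,R_{\rm f}'']\times[V_{\rm f},V_{\max}]: v=v_{\rm f}(\rho)\}$, $\Omega_{\rm c}\doteq\{u\in[0,R_{\max}]\times[0,V_{\rm c}]: W_{\rm c}\le v+p(\rho)\le W_{\max}\}$, $\Omega_{\rm f}'\doteq\{u\in\Omega_{\rm f}:\rho<R_{\rm f}'\}$, $\Omega_{\rm f}''\doteq\{u\in\Omega_{\rm f}:\rho\in[R_{\rm f}',R_{\rm f}'']\}$, $\Omega\doteq\Omega_{\rm f}\cup\Omega_{\rm c}$. For $w\in[W_{\rm c},W_{\max}]$, $\rho_{\rm f}(w)$ is the unique $\rho\in[R_{\rm f}',R_{\rm f}'']$ with $v_{\rm f}(\rho)+p(\rho)=w$. Extended Riemann invariants: $w_1(u)=v$ on $\Omega_{\rm c}$, $w_1(u)=V_{\rm f}$ on $\Omega_{\rm f}$; $w_2(u)=v+p(\rho)$ on $\Omega_{\rm c}\cup\Omega_{\rm f}''$, $w_2(u)=W_{\rm c}+v_{\rm f}(R_{\rm f}')-v_{\rm f}(\rho)$ on $\Omega_{\rm f}'$. For $\rho_-\ne\rho_+$,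 $\sigma(u_-,u_+)\doteq(\rho_+v_+-\rho_-v_-)/(\rho_+-\rho_-)$. The model is LWR $\rho_t+(\rho v_{\rm f}(\rho))_x=0$ in $\Omega_{\rm f}$ and ARZ ($\rho_t+(\rho v)_x=0$, $[\rho(v+p(\rho))]_t+[\rho(v+p(\rho))v]_x=0$) in $\Omega_{\rm c}$. A phase transition is a discontinuity between a state in $\Omega_{\rm f}$ and a state in $\Omega_{\rm c}$. $\mathcal{G}_{\rm e}\doteq\mathcal{G}_1\cup\mathcal{G}_2\cup\mathcal{G}_3$ with $\mathcal{G}_1\doteq\{(u_-,u_+)\in\Omega_{\rm f}'\times\Omega_{\rm c}:[w_2(u_+)-W_{\rm c}]\rho_-=0\}$, $\mathcal{G}_2\doteq\{(u_-,u_+)\in\Omega_{\rm f}''\times\Omega_{\rm c}:w_2(u_-)=w_2(u_+)\}$, $\mathcal{G}_3\doteq\{(u_-,u_+)\in\Omega_{\rm c}\times\Omega_{\rm f}'':w_2(u_-)=w_2(u_+),\ v_-=V_{\rm c}\}$. Riemann solver $\mathcal{R}$. $\mathcal{R}_{\rm LWR}[u_\ell,u_r]$ is the self-similar Lax solution of the LWR Riemann problem ($u_\ell,u_r\in\Omega_{\rm f}$); $\mathcal{R}_{\rm ARZ}[u_\ell,u_r]$ the self-similar Lax solution of the ARZ Riemann problem ($u_\ell,u_r\in\Omega_{\rm c}$). (R1) If both states lie in $\Omega_{\rm f}$ (resp. $\Omega_{\rm c}$), $\mathcal{R}=\mathcal{R}_{\rm LWR}$ (resp. $\mathcal{R}_{\rm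 ARZ}$). (R2) If $u_\ell\in\Omega_{\rm f}$, $u_r\in\Omega_{\rm c}$: $\mathcal{R}[u_\ell,u_r](x)=u_\ell$ for $x<\sigma(u_\ell,u_m)$, $=\mathcal{R}_{\rm ARZ}[u_m,u_r](x)$ for $x>\sigma(u_\ell,u_m)$, with $u_m=(p^{-1}(\max\{W_{\rm c},w_2(u_\ell)\}-v_r),v_r)$. (R3) If $u_\ell\in\Omega_{\rm c}$, $u_r\in\Omega_{\rm f}$: $\mathcal{R}[u_\ell,u_r](x)=\mathcal{R}_{\rm ARZ}[u_\ell,u_m'](x)$ for $x<\sigma(u_m',u_m'')$, $=\mathcal{R}_{\rm LWR}[u_m'',u_r](x)$ for $x>\sigma(u_m',u_m'')$, with $u_m'=(p^{-1}(w_2(u_\ell)-V_{\rm c}),V_{\rm c})$, $u_m''=(\rho_{\rm f}(w_2(u_\ell)),v_{\rm f}(\rho_{\rm f}(w_2(u_\ell))))$. Grid and approximate solver. $\varepsilon^n_v\doteq2^{-n}V_{\rm c}$, $\varepsilon^n_w\doteq2^{-n}(W_{\rm c}-W_{\min})$, $W^n\doteq\{W_{\min}+i\varepsilon^n_w:i=0,\dots,\lfloor(W_{\max}-W_{\min})/\varepsilon^n_w\rfloor\}$, $V^n\doteq\{i\varepsilon^n_v:i=0,\dots,2^n\}\cup\{V_{\rm f}\}$, $\Omega^n\doteq\{u\in\Omega:w_1(u)\in V^n,w_2(u)\in W^n\}$. $\mathcal{R}^n\colon\Omega^n\times\Omega^n\to L^1_{\rm loc}(\mathbb{R};\Omega^n)$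 is obtained from $\mathcal{R}$ by replacing every rarefaction fan by a discretized one: a rarefaction in $\Omega_{\rm f}$ from $u_\ell$ to $u_r$ with $w_2(u_r)=w_2(u_\ell)-j\varepsilon^n_w$ is replaced by jumps between consecutive states $u_0=u_\ell,u_1,\dots,u_j=u_r\in\Omega_{\rm f}\cap\Omega^n$ with $w_2(u_i)=w_2(u_\ell)-i\varepsilon^n_w$, the jump from $u_{i-1}$ to $u_i$ travelling with speed $\sigma(u_{i-1},u_i)$; a rarefaction in $\Omega_{\rm c}$ from $u_\ell$ to $u_r$ with $w_1(u_r)=w_1(u_\ell)+j\varepsilon^n_v$, $w_2(u_r)=w_2(u_\ell)$ is replaced likewise by jumps between $u_i\in\Omega_{\rm c}\cap\Omega^n$ with $w_1(u_i)=w_1(u_\ell)+i\varepsilon^n_v$, $w_2(u_i)=w_2(u_\ell)$; all other waves are kept. Wave-front tracking. Given piecewise constant $\bar u^n$ with values in $\Omega^n$, $u^n$ is built by solving with $\mathcal{R}^n$ the Riemann problem at each jump of $\bar u^n$ at $t=0$, letting each jump between $u_-,u_+$ travel along a straight line with speed $\sigma(u_-,u_+)$, and at each time two or more fronts meet solving with $\mathcal{R}^n$ the Riemann problem given by the states at the interaction point; $u^n$ is taken left continuous in time. *)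

(* Defs.v *)
From Stdlib Require Import Reals Lra List ClassicalEpsilon.
Import ListNotations.
Open Scope R_scope.

Definition deriv_in (D : R -> Prop) (f df : R -> R) : Prop :=
  forall x, D x -> forall eps, 0 < eps -> exists delta, 0 < delta /\
    forall y, D y -> 0 < Rabs (y - x) < delta ->
      Rabs ((f y - f x) / (y - x) - df x) < eps.

Definition cont_in (D : R -> Prop) (g : R -> R) : Prop :=
  forall x, D x -> forall eps, 0 < eps -> exists delta, 0 < delta /\
    forall y, D y -> Rabs (y - x) < delta -> Rabs (g y - g x) < eps.

Record Model := mkModel {
  vf  : R -> R;
  pp  : R -> R;
  Rf1 : R;
  Rf2 : R;
  Vc  : R
}.

Definition state := (R * R)%type.
Definition rho (u : state) : R := fst u.
Definition vel (u : state) : R := snd u.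

Definition Vmax (M : Model) : R := vf M 0.
Definition Vfl  (M : Model) : R := vf M (Rf2 M).
Definition Wmax (M : Model) : R := pp M (Rf2 M) + Vfl M.
Definition Wc   (M : Model) : R := pp M (Rf1 M) + vf M (Rf1 M).
Definition Wmin (M : Model) : R := Wc M + vf M (Rf1 M) - Vmax M.

Definition inOf (M : Model) (u : state) : Prop :=
  0 <= rho u <= Rf2 M /\ Vfl M <= vel u <= Vmax M /\ vel u = vf M (rho u).
(* p is only defined on [R_f', +oo[, hence rho >= R_f' *)
Definition inOc (M : Model) (u : state) : Prop :=
  Rf1 M <= rho u /\ 0 <= vel u <= Vc M /\
  Wc M <= vel u + pp M (rho u) <= Wmax M.
Definition inOf1 (M : Model) (u : state) : Prop := inOf M u /\ rho u < Rf1 M.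
Definition inOf2 (M : Model) (u : state) : Prop :=
  inOf M u /\ Rf1 M <= rho u <= Rf2 M.

Definition w1 (M : Model) (u : state) : R :=
  if excluded_middle_informative (inOc M u) then vel u else Vfl M.
Definition w2 (M : Model) (u : state) : R :=
  if excluded_middle_informative (inOc M u \/ inOf2 M u)
  then vel u + pp M (rho u)
  else Wc M + vf M (Rf1 M) - vf M (rho u).

Definition sigma (a b : state) : R :=
  (rho b * vel b - rho a * vel a) / (rho b - rho a).

Definition eps_v (M : Model) (n : nat) : R := Vc M / 2 ^ n.
Definition eps_w (M : Model) (n : nat) : R := (Wc M - Wmin M) / 2 ^ n.

Definition inWn (M : Model) (n : nat) (w : R) : Prop :=
  exists i : nat, INR i <= (Wmax M - Wmin M) / eps_w M n /\
                  w = Wmin M + INR i * eps_w M n.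
Definition inVn (M : Model) (n : nat) (v : R) : Prop :=
  (exists i : nat, (i <= 2 ^ n)%nat /\ v = INR i * eps_v M n) \/ v = Vfl M.
Definition inOmegan (M : Model) (n : nat) (u : state) : Prop :=
  (inOf M u \/ inOc M u) /\ inVn M n (w1 M u) /\ inWn M n (w2 M u).

(* ---------- approximate Riemann solver R^n ----------
   A solution is encoded by the list L of states such that the solution
   consists of jumps ul -> L_0 -> L_1 -> ... -> last = ur, each jump between
   consecutive states a,b travelling with speed sigma a b. *)

Definition disc_raref_f (M : Model) (n : nat) (ul ur : state) (L : list state) : Prop :=
  L <> [] /\ last L ul = ur /\
  forall i, (i < length L)%nat ->
    inOf M (nth i L ul) /\ inOmegan M n (nth i L ul) /\
    w2 M (nth i L ul) = w2 M ul - INR (S i) * eps_w M n.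

Definition disc_raref_c (M : Model) (n : nat) (ul ur : state) (L : list state) : Prop :=
  L <> [] /\ last L ul = ur /\
  forall i, (i < length L)%nat ->
    inOc M (nth i L ul) /\ inOmegan M n (nth i L ul) /\
    w1 M (nth i L ul) = w1 M ul + INR (S i) * eps_v M n /\
    w2 M (nth i L ul) = w2 M ul.

(* LWR (concave flux): shock if rho_l < rho_r, rarefaction if rho_l > rho_r *)
Definition solve_LWR (M : Model) (n : nat) (ul ur : state) (L : list state) : Prop :=
  (ul = ur /\ L = []) \/
  (rho ul < rho ur /\ L = [ur]) \/
  (rho ur < rho ul /\ disc_raref_f M n ul ur L).

Definition wave1 (M : Model) (n : nat) (ul um : state) (L : list state) : Prop :=
  (ul = um /\ L = []) \/
  (vel um < vel ul /\ L = [um]) \/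
  (vel ul < vel um /\ disc_raref_c M n ul um L).

(* ARZ: u_m = (p^{-1}(w2(ul) - v_r), v_r), 1-wave ul->um then 2-contact um->ur *)
Definition solve_ARZ (M : Model) (n : nat) (ul ur : state) (L : list state) : Prop :=
  exists um : state, vel um = vel ur /\ Rf1 M <= rho um /\
    pp M (rho um) = w2 M ul - vel ur /\
    exists L1, wave1 M n ul um L1 /\
      ((um = ur /\ L = L1) \/ (um <> ur /\ L = L1 ++ [ur])).

Definition RS (M : Model) (n : nat) (ul ur : state) (L : list state) : Prop :=
  (inOf M ul /\ inOf M ur /\ solve_LWR M n ul ur L) \/
  (inOc M ul /\ inOc M ur /\ solve_ARZ M n ul ur L) \/
  (inOf M ul /\ inOc M ur /\
     exists um : state, vel um = vel ur /\ Rf1 M <= rho um /\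
       pp M (rho um) = Rmax (Wc M) (w2 M ul) - vel ur /\
       exists L2, solve_ARZ M n um ur L2 /\ L = um :: L2) \/
  (inOc M ul /\ inOf M ur /\
     exists um1 um2 : state,
       vel um1 = Vc M /\ Rf1 M <= rho um1 /\ pp M (rho um1) = w2 M ul - Vc M /\
       Rf1 M <= rho um2 <= Rf2 M /\ vel um2 = vf M (rho um2) /\
       vf M (rho um2) + pp M (rho um2) = w2 M ul /\
       exists L1 L2, solve_ARZ M n ul um1 L1 /\ solve_LWR M n um2 ur L2 /\
                     L = L1 ++ um2 :: L2).

(* ---------- wave-front tracking ----------
   A front is (x, u_-, u_+): x its position at the starting time of the
   current stage, moving with speed sigma u_- u_+. *)
Definition front := (R * state * state)%type.
Definition fx (f : front) : R := fst (fst f).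
Definition fa (f : front) : state := snd (fst f).
Definition fb (f : front) : state := snd f.
Definition dfront : front := (0, (0, 0), (0, 0)).

Fixpoint fan_fronts (x : R) (a : state) (L : list state) : list front :=
  match L with
  | [] => []
  | b :: L' => (x, a, b) :: fan_fronts x b L'
  end.

Definition pos (Tk : R) (f : front) (t : R) : R :=
  fx f + (t - Tk) * sigma (fa f) (fb f).

(* initial data: left state u0 and jumps (y_j, a_j); each jump solved by R^n *)
Inductive init_rel (M : Model) (n : nat) : state -> list (R * state) -> list front -> Prop :=
| init_nil : forall a, init_rel M n a [] []
| init_cons : forall a y b js L C,
    RS M n a b L -> init_rel M n b js C ->
    init_rel M n a ((y, b) :: js) (fan_fronts y a L ++ C).

Definition group_interacts (G : list front) : Prop :=
  exists i, (S i < length G)%nat /\ fx (nth i G dfront) <> fx (nth (S i) G dfront).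

Definition group_out (M : Model) (n : nat) (Tk Tk1 : R) (G out : list front) : Prop :=
  let xs := pos Tk (hd dfront G) Tk1 in
  let a := fa (hd dfront G) in
  let b := fb (last G dfront) in
  (group_interacts G /\ exists L, RS M n a b L /\ out = fan_fronts xs a L) \/
  (~ group_interacts G /\ out = map (fun f => (xs, fa f, fb f)) G).

Inductive resolve (M : Model) (n : nat) (Tk Tk1 : R) : list front -> list front -> Prop :=
| res_nil : resolve M n Tk Tk1 [] []
| res_grp : forall G rest out out',
    G <> [] ->
    (forall f, In f G -> pos Tk f Tk1 = pos Tk (hd dfront G) Tk1) ->
    (match rest with
     | [] => True
     | g :: _ => pos Tk g Tk1 <> pos Tk (hd dfront G) Tk1
     end) ->
    group_out M n Tk Tk1 G out ->
    resolve M n Tk Tk1 rest out' ->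
    resolve M n Tk Tk1 (G ++ rest) (out ++ out').

Definition step (M : Model) (n : nat) (Tk : R) (Ck : list front) (Tk1 : R)
    (Ck1 : list front) : Prop :=
  Tk < Tk1 /\
  (forall t, Tk <= t <= Tk1 -> forall i, (S i < length Ck)%nat ->
     pos Tk (nth i Ck dfront) t <= pos Tk (nth (S i) Ck dfront) t) /\
  (forall t, Tk < t < Tk1 -> forall i, (S i < length Ck)%nat ->
     fx (nth i Ck dfront) < fx (nth (S i) Ck dfront) ->
     pos Tk (nth i Ck dfront) t < pos Tk (nth (S i) Ck dfront) t) /\
  (exists i, (S i < length Ck)%nat /\
     fx (nth i Ck dfront) < fx (nth (S i) Ck dfront) /\
     pos Tk (nth i Ck dfront) Tk1 = pos Tk (nth (S i) Ck dfront) Tk1) /\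
  resolve M n Tk Tk1 Ck Ck1.

(* the first K interactions of the wave-front tracking construction:
   stage k lives on the time interval (T k, T (k+1)] (left continuity) *)
Definition wft_run (M : Model) (n : nat) (u0 : state) (js : list (R * state))
    (K : nat) (T : nat -> R) (C : nat -> list front) : Prop :=
  T 0%nat = 0 /\ init_rel M n u0 js (C 0%nat) /\
  forall k, (k < K)%nat -> step M n (T k) (C k) (T (S k)) (C (S k)).

Definition ubar_ok (M : Model) (n : nat) (u0 : state) (js : list (R * state)) : Prop :=
  inOmegan M n u0 /\ (forall y a, In (y, a) js -> inOmegan M n a) /\
  forall i, (S i < length js)%nat ->
    fst (nth i js (0, u0)) < fst (nth (S i) js (0, u0)).

Definition isPT (M : Model) (a b : state) : Prop :=
  (inOf M a /\ inOc M b) \/ (inOc M a /\ inOf M b).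

Definition inG1 (M : Model) (a b : state) : Prop :=
  inOf1 M a /\ inOc M b /\ (w2 M b - Wc M) * rho a = 0.
Definition inG2 (M : Model) (a b : state) : Prop :=
  inOf2 M a /\ inOc M b /\ w2 M a = w2 M b.
Definition inG3 (M : Model) (a b : state) : Prop :=
  inOc M a /\ inOf2 M b /\ w2 M a = w2 M b /\ vel a = Vc M.
Definition inGe (M : Model) (a b : state) : Prop :=
  inG1 M a b \/ inG2 M a b \/ inG3 M a b.

Definition PTind (M : Model) (a b : state) : nat :=
  if excluded_middle_informative (isPT M a b) then 1%nat else 0%nat.

Fixpoint countPT (M : Model) (C : list front) : nat :=
  match C with
  | [] => 0%nat
  | f :: C' => (PTind M (fa f) (fb f) + countPT M C')%nat
  end.

Fixpoint countPT_ubar (M : Model) (a : state) (js : list (R * state)) : nat :=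
  match js with
  | [] => 0%nat
  | (_, b) :: js' => (PTind M a b + countPT_ubar M b js')%nat
  end.

Definition PT_interact (M : Model) (Tk : R) (Ck : list front) (Tk1 : R) : Prop :=
  exists i j, (i < j)%nat /\ (j < length Ck)%nat /\
    isPT M (fa (nth i Ck dfront)) (fb (nth i Ck dfront)) /\
    isPT M (fa (nth j Ck dfront)) (fb (nth j Ck dfront)) /\
    fx (nth i Ck dfront) <> fx (nth j Ck dfront) /\
    pos Tk (nth i Ck dfront) Tk1 = pos Tk (nth j Ck dfront) Tk1.

(* Main.v *)
From Pilot Require Import Defs.
From Stdlib Require Import Reals List Arith Lra Lia Classical ClassicalEpsilon Sorted.
Import ListNotations.
Open Scope R_scope.

Lemma mono_deriv lo hi f df : deriv_in (fun r => lo <= r <= hi) f df ->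
  (forall r, lo <= r <= hi -> df r <= 0) ->
  forall x y, lo <= x -> x <= y -> y <= hi -> f y <= f x.
Proof.
intros Hd Hneg x y Hx Hxy Hy.
assert (Key: forall eps, 0 < eps -> f y <= f x + eps * (y - x)).
{ intros eps Heps.
  set (E := fun r => x <= r <= y /\ forall z, x <= z <= r -> f z <= f x + eps * (z - x)).
  assert (HEx : E x). { split. lra. intros z Hz. assert (z = x) by lra. subst z. lra. }
  assert (Hb : bound E). { exists y. intros r [Hr _]. lra. }
  destruct (completeness E Hb (ex_intro _ x HEx)) as [s [Hub Hlub]].
  assert (Hxs : x <= s) by (apply Hub; exact HEx).
  assert (Hsy : s <= y). { apply Hlub. intros r [Hr _]. lra. }
  assert (A : forall z, x <= z < s -> f z <= f x + eps * (z - x)).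
  { intros z Hz. destruct (classic (exists r, E r /\ z < r)) as [[r [[Hr1 Hr2] Hzr]] | Hn].
    - apply Hr2. lra.
    - exfalso. assert (s <= z).
      { apply Hlub. intros r Hr. destruct (Rle_dec r z) as [|Hrz]; auto.
        exfalso; apply Hn. exists r. split; auto. lra. }
      lra. }
  assert (B : f s <= f x + eps * (s - x)).
  { destruct (Req_dec s x) as [->|Hsx]. lra.
    destruct (Hd s ltac:(lra) eps Heps) as [delta [Hdel Hdd]].
    set (z := Rmax x (s - delta/2)).
    assert (Hz1 : x <= z) by apply Rmax_l.
    assert (Hz2 : s - delta/2 <= z) by apply Rmax_r.
    assert (Hz3 : z < s). { unfold z. apply Rmax_lub_lt; lra. }
    specialize (Hdd z ltac:(lra)).
    assert (Habs : 0 < Rabs (z - s) < delta). { rewrite Rabs_left by lra. lra. }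
    specialize (Hdd Habs). apply Rabs_def2 in Hdd. destruct Hdd as [Hq _].
    specialize (Hneg s ltac:(lra)). specialize (A z ltac:(lra)).
    set (q := (f z - f s) / (z - s)) in *.
    assert (Hfq : f z - f s = q * (z - s)). { unfold q. field. lra. }
    nra. }
  assert (Cc : s = y).
  { destruct (Req_dec s y) as [|Hne]; auto. exfalso.
    destruct (Hd s ltac:(lra) eps Heps) as [delta [Hdel Hdd]].
    set (r := Rmin y (s + delta/2)).
    assert (Hr1 : r <= y) by apply Rmin_l.
    assert (Hr2 : r <= s + delta/2) by apply Rmin_r.
    assert (Hr3 : s < r). { unfold r. apply Rmin_glb_lt; lra. }
    assert (Er : E r).
    { split. lra. intros z Hz.
      destruct (Rtotal_order z s) as [Hlt|[Heq|Hgt]].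
      - apply A; lra.
      - rewrite Heq; exact B.
      - specialize (Hdd z ltac:(lra)).
        assert (Habs : 0 < Rabs (z - s) < delta). { rewrite Rabs_right by lra. lra. }
        specialize (Hdd Habs). apply Rabs_def2 in Hdd. destruct Hdd as [Hq _].
        specialize (Hneg s ltac:(lra)).
        set (q := (f z - f s) / (z - s)) in *.
        assert (Hfq : f z - f s = q * (z - s)). { unfold q. field. lra. }
        nra. }
    specialize (Hub r Er). lra. }
  subst s. exact B. }
destruct (Req_dec x y) as [->|Hne]. lra.
destruct (Rle_dec (f y) (f x)) as [|Hgt]; auto.
exfalso. set (eps := (f y - f x) / (2 * (y - x))).
assert (Heps : 0 < eps). { unfold eps. apply Rdiv_lt_0_compat; lra. }
specialize (Key eps Heps).
assert (eps * (y - x) = (f y - f x)/2). { unfold eps. field. lra. }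
lra.
Qed.
Definition dom M u := inOf M u \/ inOc M u.
Definition Hyps (M : Model) : Prop :=
  0 < Vc M < Vfl M /\ 0 < Rf1 M < Rf2 M /\
  (forall r s, Rf1 M <= r -> r < s -> s <= Rf2 M -> vf M r + pp M r < vf M s + pp M s) /\
  (forall x y, 0 <= x -> x <= y -> y <= Rf2 M -> vf M y <= vf M x).

Lemma disj M u : Hyps M -> inOf M u -> inOc M u -> False.
Proof. unfold inOf, inOc; intros [HV _] [_ [[Hv _] _]] [_ [[_ Hv2] _]]. lra. Qed.

Lemma PTind_1 M a b : isPT M a b -> PTind M a b = 1%nat.
Proof. unfold PTind; destruct excluded_middle_informative; tauto. Qed.
Lemma PTind_0 M a b : ~ isPT M a b -> PTind M a b = 0%nat.
Proof. unfold PTind; destruct excluded_middle_informative; tauto. Qed.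
Lemma PTind_le1 M a b : (PTind M a b <= 1)%nat.
Proof. unfold PTind; destruct excluded_middle_informative; lia. Qed.

Lemma PTind_ff M a b : Hyps M -> inOf M a -> inOf M b -> PTind M a b = 0%nat.
Proof. intros H Ha Hb. apply PTind_0. intros [[_ Hc]|[Hc _]]; [apply (disj M b)|apply (disj M a)]; auto. Qed.
Lemma PTind_cc M a b : Hyps M -> inOc M a -> inOc M b -> PTind M a b = 0%nat.
Proof. intros H Ha Hb. apply PTind_0. intros [[Hc _]|[_ Hc]]; [apply (disj M a)|apply (disj M b)]; auto. Qed.
Lemma PTind_fc M a b : inOf M a -> inOc M b -> PTind M a b = 1%nat.
Proof. intros; apply PTind_1; left; auto. Qed.
Lemma PTind_cf M a b : inOc M a -> inOf M b -> PTind M a b = 1%nat.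
Proof. intros; apply PTind_1; right; auto. Qed.

Lemma w2_Oc M u : inOc M u -> w2 M u = vel u + pp M (rho u).
Proof. intro H. unfold w2. destruct excluded_middle_informative as [_|n]; [reflexivity|tauto]. Qed.
Lemma w2_Of2 M u : inOf2 M u -> w2 M u = vel u + pp M (rho u).
Proof. intro H. unfold w2. destruct excluded_middle_informative as [_|n]; [reflexivity|tauto]. Qed.
Lemma w2_Of1 M u : Hyps M -> inOf1 M u -> w2 M u = Wc M + vf M (Rf1 M) - vf M (rho u).
Proof.
intros H [Hf Hr]. unfold w2. destruct excluded_middle_informative as [[Hc|[_ Hc]]|_]; [|lra|reflexivity].
exfalso; eapply disj; eauto.
Qed.

Lemma Of_split M u : inOf M u -> inOf1 M u \/ inOf2 M u.
Proof. intro H. destruct (Rlt_dec (rho u) (Rf1 M)); [left|right]; split; auto.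
destruct H as [[_ ?] _]. lra. Qed.

Lemma Wc_le_Wmax M : Hyps M -> Wc M <= Wmax M.
Proof. intros (_&HR&Hi&_). unfold Wc, Wmax, Vfl.
specialize (Hi (Rf1 M) (Rf2 M) ltac:(lra) ltac:(lra) ltac:(lra)). lra. Qed.

Lemma Of_w2 M u : Hyps M -> inOf M u ->
  (inOf1 M u /\ w2 M u <= Wc M) \/ (inOf2 M u /\ Wc M <= w2 M u <= Wmax M).
Proof.
intros H Hu. pose proof H as (HV&HR&Hi&Hm). destruct (Of_split M u Hu) as [H1|H2].
- left. split; auto. rewrite w2_Of1 by auto. destruct H1 as [[[? ?] _] ?].
  specialize (Hm (rho u) (Rf1 M) ltac:(lra) ltac:(lra) ltac:(lra)). lra.
- right. split; auto. rewrite w2_Of2 by auto. destruct H2 as [[_ [_ Hv]] Hr].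
  rewrite Hv. unfold Wc, Wmax, Vfl. split.
  + destruct (Req_dec (rho u) (Rf1 M)) as [->|]; [lra|].
    specialize (Hi (Rf1 M) (rho u) ltac:(lra) ltac:(lra) ltac:(lra)). lra.
  + destruct (Req_dec (rho u) (Rf2 M)) as [->|]; [lra|].
    specialize (Hi (rho u) (Rf2 M) ltac:(lra) ltac:(lra) ltac:(lra)). lra.
Qed.

Inductive chainP : state -> list front -> state -> Prop :=
| ch_nil a : chainP a [] a
| ch_cons a x c C b : chainP c C b -> chainP a ((x, a, c) :: C) b.

Lemma last_cons_d {A} (b a : A) L : last (b :: L) a = last L b.
Proof. revert b. induction L; intros; [reflexivity|]. simpl. destruct L; [reflexivity|]. apply IHL. Qed.

Lemma fan_fx x a L f : In f (fan_fronts x a L) -> fx f = x.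
Proof. revert a; induction L; simpl; intros a0 H; [contradiction|].
destruct H as [<-|H]; [reflexivity|eauto]. Qed.

Lemma fan_app x a L1 L2 : fan_fronts x a (L1 ++ L2) = fan_fronts x a L1 ++ fan_fronts x (last L1 a) L2.
Proof. revert a; induction L1 as [|c L1 IH]; intros a0; [reflexivity|]. rewrite last_cons_d. simpl. rewrite IH. reflexivity. Qed.

Lemma chain_fan x a L : chainP a (fan_fronts x a L) (last L a).
Proof. revert a; induction L as [|c L IH]; intros a0. constructor. rewrite last_cons_d. simpl. constructor. apply IH. Qed.

Lemma chain_app a F1 m F2 b : chainP a F1 m -> chainP m F2 b -> chainP a (F1 ++ F2) b.
Proof. induction 1; intros; simpl; auto. constructor; auto. Qed.

Lemma chain_app_inv F1 F2 a b : chainP a (F1 ++ F2) b -> exists m, chainP a F1 m /\ chainP m F2 b.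
Proof. revert a; induction F1; intros a0 H; simpl in *.
- exists a0; split; [constructor|auto].
- inversion H as [|? ? c ? ? Hc]; subst. destruct (IHF1 _ Hc) as [m [H1 H2]]. exists m; split; auto. constructor; auto.
Qed.

Definition DomF M C := Forall (fun f => dom M (fa f) /\ dom M (fb f)) C.
Definition GeF M C := Forall (fun f => isPT M (fa f) (fb f) -> inGe M (fa f) (fb f)) C.

Definition fanOK M x a b L := let F := fan_fronts x a L in
  chainP a F b /\ DomF M F /\ GeF M F /\ countPT M F = PTind M a b.

Lemma Forall_last {A} (P : A -> Prop) a L : P a -> Forall P L -> P (last L a).
Proof. revert a; induction L as [|c L IH]; intros a0 Ha HL; auto. inversion HL; subst.
rewrite last_cons_d. auto. Qed.

Lemma fan_uniform M (P : state -> Prop) x a b L :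
  (forall u, P u -> dom M u) -> (forall u v, P u -> P v -> PTind M u v = 0%nat) ->
  P a -> Forall P L -> last L a = b -> fanOK M x a b L.
Proof.
intros Hd H0 Ha HL Hl. subst b. unfold fanOK. cbv zeta. split; [apply chain_fan|].
assert (HF : Forall (fun f => P (fa f) /\ P (fb f)) (fan_fronts x a L)).
{ revert a Ha; induction L; intros a0 Ha; simpl; constructor; inversion HL; subst; simpl; auto. }
split; [|split].
- eapply Forall_impl; [|exact HF]. intros f [? ?]; split; auto.
- eapply Forall_impl; [|exact HF]. intros f [? ?] Hp. apply PTind_1 in Hp. rewrite H0 in Hp; auto. discriminate.
- rewrite H0 by (try apply Forall_last; auto). clear HF. revert a Ha; induction L; intros a0 Ha; simpl; auto.
  inversion HL; subst. rewrite H0 by auto. simpl. apply IHL; auto.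
Qed.

Lemma fan_cons M x a c b L : fanOK M x c b L -> dom M a -> dom M c ->
  (isPT M a c -> inGe M a c) -> (PTind M a c + PTind M c b = PTind M a b)%nat ->
  fanOK M x a b (c :: L).
Proof.
unfold fanOK; cbv zeta; simpl. intros (H1&H2&H3&H4) Ha Hc Hg Hp.
split; [constructor; auto|]. split; [constructor; auto|]. split; [constructor; auto|]. unfold fa; simpl. lia.
Qed.

Lemma countPT_app M A B : countPT M (A ++ B) = (countPT M A + countPT M B)%nat.
Proof. induction A; simpl; auto. lia. Qed.

Lemma fan_app_ok M x a m b L1 L2 : fanOK M x a m L1 -> last L1 a = m -> fanOK M x m b L2 ->
  (PTind M a m + PTind M m b = PTind M a b)%nat -> fanOK M x a b (L1 ++ L2).
Proof.
unfold fanOK; cbv zeta. intros (H1&H2&H3&H4) Hl (G1&G2&G3&G4) Hp. rewrite fan_app, Hl.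
split; [eapply chain_app; eauto|]. split; [apply Forall_app; auto|]. split; [apply Forall_app; auto|].
rewrite countPT_app. lia.
Qed.

Lemma nth_Forall {A} (P : A -> Prop) L d : (forall i, (i < length L)%nat -> P (nth i L d)) -> Forall P L.
Proof. intro H. apply Forall_forall. intros u Hu. destruct (In_nth L u d Hu) as [i [Hi <-]]. auto. Qed.

Lemma LWR_ok M n a b L : inOf M a -> inOf M b -> solve_LWR M n a b L -> Forall (inOf M) L /\ last L a = b.
Proof.
intros Ha Hb [[-> ->]|[[_ ->]|[_ [Hne [Hl Hall]]]]].
- split; auto.
- split; auto.
- split; auto. apply (nth_Forall _ _ a). intros i Hi. apply Hall; auto.
Qed.

Lemma ARZ_ok M n a b L : Hyps M -> inOc M a -> inOc M b -> solve_ARZ M n a b L -> Forall (inOc M) L /\ last L a = b.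
Proof.
intros H Ha Hb [um [Hv [Hr [Hp [L1 [Hw Hcase]]]]]].
assert (Hum : inOc M um).
{ rewrite w2_Oc in Hp by auto. destruct Ha as (_&_&Ha). destruct Hb as (_&Hb&_).
  split; auto. split; rewrite Hv; [auto|]. lra. }
assert (HL1 : Forall (inOc M) L1 /\ last L1 a = um).
{ destruct Hw as [[-> ->]|[[_ ->]|[_ [Hne [Hl Hall]]]]]; auto.
  split; auto. apply (nth_Forall _ _ a). intros i Hi. apply Hall; auto. }
destruct HL1 as [HF Hl].
destruct Hcase as [[-> ->]|[_ ->]]; auto.
split. apply Forall_app; auto. apply last_last.
Qed.

Lemma dom_Of M u : inOf M u -> dom M u. Proof. left; auto. Qed.
Lemma dom_Oc M u : inOc M u -> dom M u. Proof. right; auto. Qed.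

Lemma RS_ok M n x a b L : Hyps M -> RS M n a b L -> fanOK M x a b L.
Proof.
intros H HRS. pose proof H as (HV&HR&Hi&Hm).
destruct HRS as [(Ha&Hb&Hs)|[(Ha&Hb&Hs)|[(Ha&Hb&um&Hv&Hr&Hp&L2&Hs&->)|(Ha&Hb&um1&um2&Hv1&Hr1&Hp1&Hr2&Hv2&Hw2&L1&L2&Hs1&Hs2&->)]]].
- destruct (LWR_ok _ _ _ _ _ Ha Hb Hs) as [HF Hl].
  apply (fan_uniform M (inOf M)); auto using dom_Of. intros; apply PTind_ff; auto.
- destruct (ARZ_ok _ _ _ _ _ H Ha Hb Hs) as [HF Hl].
  apply (fan_uniform M (inOc M)); auto using dom_Oc. intros; apply PTind_cc; auto.
- assert (Hw := Of_w2 M a H Ha). pose proof (Wc_le_Wmax M H).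
  assert (Hum : inOc M um).
  { destruct Hb as (_&Hb&_). split; auto. split; rewrite Hv; [auto|].
    split. pose proof (Rmax_l (Wc M) (w2 M a)); lra.
    assert (Rmax (Wc M) (w2 M a) <= Wmax M) by (apply Rmax_lub; lra). lra. }
  assert (Hw2 : w2 M um = Rmax (Wc M) (w2 M a)). { rewrite w2_Oc by auto. lra. }
  destruct (ARZ_ok _ _ _ _ _ H Hum Hb Hs) as [HF Hl].
  apply fan_cons; auto using dom_Of, dom_Oc.
  + apply (fan_uniform M (inOc M)); auto using dom_Oc. intros; apply PTind_cc; auto.
  + intros _. destruct Hw as [[H1 Hle]|[H2 Hle]].
    * left. split; auto. split; auto. rewrite Hw2, Rmax_left by lra. lra.
    * right; left. split; auto. split; auto. rewrite Hw2, Rmax_right by lra. reflexivity.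
  + rewrite PTind_fc, PTind_cc, PTind_fc; auto.
- assert (Hum1 : inOc M um1).
  { rewrite w2_Oc in Hp1 by auto. destruct Ha as (_&_&Ha). split; auto. rewrite Hv1. split; lra. }
  assert (Hw1 : w2 M um1 = w2 M a). { rewrite w2_Oc by auto. lra. }
  assert (Hum2f : inOf M um2).
  { split; [lra|]. split; auto. rewrite Hv2. unfold Vfl, Vmax. split.
    apply Hm; lra. apply Hm; lra. }
  assert (Hum2 : inOf2 M um2) by (split; auto).
  assert (Hw2' : w2 M um2 = w2 M a). { rewrite w2_Of2 by auto. lra. }
  destruct (ARZ_ok _ _ _ _ _ H Ha Hum1 Hs1) as [HF1 Hl1].
  destruct (LWR_ok _ _ _ _ _ Hum2f Hb Hs2) as [HF2 Hl2].
  apply (fan_app_ok M x a um1 b); auto.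
  + apply (fan_uniform M (inOc M)); auto using dom_Oc. intros; apply PTind_cc; auto.
  + apply fan_cons; auto using dom_Of, dom_Oc.
    * apply (fan_uniform M (inOf M)); auto using dom_Of. intros; apply PTind_ff; auto.
    * intros _. right; right. repeat split; auto; try apply Hum1; try apply Hum2f; try lra.
    * rewrite PTind_cf, PTind_ff, PTind_cf; auto.
  + rewrite PTind_cc, PTind_cf, PTind_cf; auto.
Qed.
Notation dpos := Pilot.Defs.pos.

Definition isPTf M f := isPT M (fa f) (fb f).

Fixpoint sep M (C : list front) : Prop :=
  match C with
  | [] => True
  | f :: C' => (isPTf M f -> forall g, In g C' -> isPTf M g -> fx g <> fx f) /\ sep M C'
  end.

Lemma sep_app M A B : sep M A -> sep M B ->
  (forall f g, In f A -> In g B -> fx g <> fx f) -> sep M (A ++ B).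
Proof.
induction A as [|f A IH]; simpl; auto. intros [H1 H2] HB Hx. split.
- intros Hf g Hg Hpg. apply in_app_or in Hg as [Hg|Hg]; [eapply H1; eauto|]. apply Hx; auto.
- apply IH; auto.
Qed.

Lemma sep_app_inv M A B : sep M (A ++ B) -> sep M A /\ sep M B.
Proof. induction A as [|f A IH]; simpl; auto. intros [H1 H2]. destruct (IH H2). split; auto.
split; auto. intros Hf g Hg. apply H1; auto. apply in_or_app; auto. Qed.

Lemma count0_noPT M C : countPT M C = 0%nat -> forall g, In g C -> ~ isPTf M g.
Proof. induction C as [|f C IH]; simpl; [tauto|]. intros H g [<-|Hg] Hp.
- unfold isPTf in Hp. rewrite PTind_1 in H by auto. lia.
- apply (IH ltac:(lia) g Hg Hp). Qed.

Lemma noPT_count0 M C : (forall g, In g C -> ~ isPTf M g) -> countPT M C = 0%nat.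
Proof. induction C as [|f C IH]; simpl; auto. intros H. rewrite PTind_0 by (apply (H f); auto).
rewrite IH; auto. Qed.

Lemma count_le1_sep M C : (countPT M C <= 1)%nat -> sep M C.
Proof. induction C as [|f C IH]; simpl; auto. intros H. split.
- intros Hf g Hg Hpg. unfold isPTf in Hf. rewrite PTind_1 in H by auto.
  exfalso. apply (count0_noPT M C ltac:(lia) g Hg Hpg).
- apply IH. lia. Qed.

Lemma sep_allsame M C x : sep M C -> (forall f, In f C -> fx f = x) -> (countPT M C <= 1)%nat.
Proof. induction C as [|f C IH]; simpl; [lia|]. intros [H1 H2] Hx.
destruct (classic (isPTf M f)) as [Hf|Hf].
- rewrite PTind_1 by auto. rewrite noPT_count0; [lia|]. intros g Hg Hpg.
  apply (H1 Hf g Hg Hpg). rewrite (Hx g), (Hx f); auto.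
- rewrite PTind_0 by auto. simpl. apply IH; auto.
Qed.

Definition GPT M G := exists f g, In f G /\ In g G /\ isPTf M f /\ isPTf M g /\ fx f <> fx g.

Lemma count_ge1 M C g : In g C -> isPTf M g -> (1 <= countPT M C)%nat.
Proof. induction C as [|f C IH]; simpl; [tauto|]. intros [<-|Hg] Hp.
- rewrite PTind_1 by auto. lia.
- specialize (IH Hg Hp). lia. Qed.

Lemma sep_ge2 M C : sep M C -> (2 <= countPT M C)%nat -> GPT M C.
Proof. induction C as [|f C IH]; simpl; [lia|]. intros [H1 H2] Hc.
destruct (classic (isPTf M f)) as [Hf|Hf].
- rewrite PTind_1 in Hc by auto.
  destruct (classic (exists g, In g C /\ isPTf M g)) as [[g [Hg Hpg]]|Hn].
  + exists f, g. split; [left; auto|]. split; [right; auto|]. split; [auto|]. split; [auto|]. intro E. apply (H1 Hf g Hg Hpg). auto.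
  + exfalso. rewrite noPT_count0 in Hc; [lia|]. intros g Hg Hpg. apply Hn; eauto.
- rewrite PTind_0 in Hc by auto. destruct (IH H2 ltac:(lia)) as (f1&g1&?&?&?&?&?).
  exists f1, g1. split; [right; auto|]. split; [right; auto|]. auto.
Qed.

Lemma two_PT_count M C f g : In f C -> In g C -> isPTf M f -> isPTf M g -> fx f <> fx g ->
  (2 <= countPT M C)%nat.
Proof. induction C as [|h C IH]; simpl; [tauto|]. intros Hf Hg Pf Pg Hne.
destruct Hf as [<-|Hf].
- destruct Hg as [<-|Hg]; [tauto|]. rewrite PTind_1 by auto. pose proof (count_ge1 M C g Hg Pg). lia.
- destruct Hg as [<-|Hg].
  + rewrite PTind_1 by auto. pose proof (count_ge1 M C f Hf Pf). lia.
  + specialize (IH Hf Hg Pf Pg Hne). lia.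
Qed.

Ltac ptsimp H :=
  repeat match goal with
  | [ Ha : inOf ?M ?a, Hb : inOf ?M ?b |- context[PTind ?M ?a ?b] ] => rewrite (PTind_ff M a b H Ha Hb)
  | [ Ha : inOc ?M ?a, Hb : inOc ?M ?b |- context[PTind ?M ?a ?b] ] => rewrite (PTind_cc M a b H Ha Hb)
  | [ Ha : inOf ?M ?a, Hb : inOc ?M ?b |- context[PTind ?M ?a ?b] ] => rewrite (PTind_fc M a b Ha Hb)
  | [ Ha : inOc ?M ?a, Hb : inOf ?M ?b |- context[PTind ?M ?a ?b] ] => rewrite (PTind_cf M a b Ha Hb)
  end.

Lemma triangle M a c b : Hyps M -> dom M a -> dom M c -> dom M b ->
  exists k, (PTind M a c + PTind M c b = PTind M a b + 2 * k)%nat.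
Proof.
intros H [Ha|Ha] [Hc|Hc] [Hb|Hb]; ptsimp H; first [exists 0%nat; lia | exists 1%nat; lia].
Qed.

Lemma parity M a G b : Hyps M -> chainP a G b -> dom M a -> dom M b -> DomF M G ->
  exists m, countPT M G = (PTind M a b + 2 * m)%nat.
Proof.
intros H Hch. induction Hch as [a|a x c C b Hch IH]; intros Ha Hb HD.
- exists 0%nat. simpl. destruct Ha as [Ha|Ha]; [rewrite (PTind_ff M a a H Ha Ha)|rewrite (PTind_cc M a a H Ha Ha)]; lia.
- inversion HD as [|? ? [Hda Hdc] HD']; subst. simpl in Hdc.
  destruct (IH Hdc Hb HD') as [m Hm]. destruct (triangle M a c b H Ha Hdc Hb) as [k Hk].
  exists (m + k)%nat. simpl. unfold fa; simpl. lia.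
Qed.

Lemma chain_hd_last a G b : chainP a G b -> G <> [] -> fa (hd dfront G) = a /\ fb (last G dfront) = b.
Proof.
induction 1 as [a|a x c C b Hch IH]; intros Hne; [tauto|]. split; [reflexivity|].
destruct C as [|f C].
- inversion Hch; subst. reflexivity.
- destruct (IH ltac:(discriminate)) as [_ H2]. exact H2.
Qed.

Lemma chain_dom_end M a G b : chainP a G b -> dom M a -> DomF M G -> dom M b.
Proof. induction 1; intros Ha HD; auto. inversion HD as [|? ? [_ Hc] HD']; subst. auto. Qed.

Lemma chain_map xs a G b : chainP a G b -> chainP a (map (fun f => (xs, fa f, fb f)) G) b.
Proof. induction 1; simpl; constructor; auto. Qed.

Lemma countPT_map M xs G : countPT M (map (fun f => (xs, fa f, fb f)) G) = countPT M G.
Proof. induction G; simpl; auto. Qed.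

Lemma group_lemma M n Tk Tk1 G out a b : Hyps M -> G <> [] -> chainP a G b -> DomF M G -> GeF M G ->
  sep M G -> group_out M n Tk Tk1 G out ->
  chainP a out b /\ DomF M out /\ GeF M out /\ (countPT M out <= 1)%nat /\
  (forall f, In f out -> fx f = dpos Tk (hd dfront G) Tk1) /\
  (countPT M out <= countPT M G)%nat /\ (exists m, countPT M G = countPT M out + 2 * m)%nat /\
  ((countPT M out < countPT M G)%nat <-> GPT M G).
Proof.
intros H Hne Hch HD HG Hs Hgo.
destruct (chain_hd_last a G b Hch Hne) as [Hhd Hlast].
assert (Ha : dom M a).
{ destruct G as [|f G']; [tauto|]. inversion HD as [|? ? [? _] _]; subst. simpl in *. auto. }
assert (Hb : dom M b) by (eapply chain_dom_end; eauto).
destruct (parity M a G b H Hch Ha Hb HD) as [m Hm].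
unfold group_out in Hgo. cbv zeta in Hgo.
destruct Hgo as [[Hint [L [HRS ->]]]|[Hni ->]].
- rewrite Hhd, Hlast in HRS. rewrite Hhd.
  destruct (RS_ok M n (dpos Tk (hd dfront G) Tk1) a b L H HRS) as (C1&C2&C3&C4).
  pose proof (PTind_le1 M a b).
  split; [exact C1|]. split; [exact C2|]. split; [exact C3|]. split; [lia|]. split; [apply fan_fx|].
  split; [lia|]. split; [exists m; lia|]. split.
  + intros Hlt. apply sep_ge2; auto. lia.
  + intros (f&g&?&?&?&?&?). pose proof (two_PT_count M G f g); intuition lia.
- assert (Hall : forall f, In f G -> fx f = fx (hd dfront G)).
  { assert (Hadj : forall i, (S i < length G)%nat -> fx (nth i G dfront) = fx (nth (S i) G dfront)).
    { intros i Hi. destruct (Req_dec (fx (nth i G dfront)) (fx (nth (S i) G dfront))); auto.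
      exfalso. apply Hni. exists i. auto. }
    assert (Hi0 : forall i, (i < length G)%nat -> fx (nth i G dfront) = fx (nth 0 G dfront)).
    { induction i; intros Hi; auto. rewrite <- Hadj by lia. apply IHi. lia. }
    intros f Hf. destruct (In_nth G f dfront Hf) as [i [Hi <-]]. rewrite Hi0 by auto.
    destruct G; reflexivity. }
  assert (Hc1 : (countPT M G <= 1)%nat) by (eapply sep_allsame; eauto).
  rewrite countPT_map. split; [apply chain_map; auto|].
  split. { unfold DomF in *. apply Forall_map. eapply Forall_impl; [|exact HD]. simpl; auto. }
  split. { unfold GeF in *. apply Forall_map. eapply Forall_impl; [|exact HG]. simpl; auto. }
  split; auto. split.
  { intros f Hf. apply in_map_iff in Hf as [g [<- _]]. reflexivity. }
  split; [lia|]. split; [exists 0%nat; lia|]. split; [lia|].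
  intros (f&g&Hf&Hg&_&_&Hne'). exfalso. apply Hne'. rewrite (Hall f), (Hall g); auto.
Qed.

Definition PI M Tk Tk1 C := exists f g, In f C /\ In g C /\ isPTf M f /\ isPTf M g /\
  fx f <> fx g /\ dpos Tk f Tk1 = dpos Tk g Tk1.

Lemma SS_app_inv {A} (Rl : A -> A -> Prop) X Y : StronglySorted Rl (X ++ Y) ->
  StronglySorted Rl X /\ StronglySorted Rl Y /\ (forall x y, In x X -> In y Y -> Rl x y).
Proof.
induction X as [|x X IH]; simpl; intros H.
- split; [constructor|]. split; auto. tauto.
- apply StronglySorted_inv in H as [H1 H2]. destruct (IH H1) as (A1&A2&A3).
  split; [constructor; auto|]. 
  + apply Forall_forall. intros z Hz. rewrite Forall_forall in H2. apply H2. apply in_or_app; auto.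
  + split; auto. intros x0 y [<-|Hx] Hy; auto. rewrite Forall_forall in H2. apply H2. apply in_or_app; auto.
Qed.

Lemma resolve_lemma M n Tk Tk1 C C' : Hyps M -> resolve M n Tk Tk1 C C' ->
  forall a b, chainP a C b -> DomF M C -> GeF M C -> sep M C ->
  StronglySorted (fun f g => dpos Tk f Tk1 <= dpos Tk g Tk1) C ->
  chainP a C' b /\ DomF M C' /\ GeF M C' /\ sep M C' /\
  (forall f', In f' C' -> exists g, In g C /\ fx f' = dpos Tk g Tk1) /\
  (countPT M C' <= countPT M C)%nat /\ (exists m, countPT M C = countPT M C' + 2 * m)%nat /\
  ((countPT M C' < countPT M C)%nat <-> PI M Tk Tk1 C).
Proof.
intros H Hres. induction Hres as [|G rest out out' HG Hpos Hnext Hgo Hres IH];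
  intros a b Hch HD HGe Hs HS.
- inversion Hch; subst. split; [constructor|]. split; [constructor|]. split; [constructor|].
  split; [simpl; auto|]. split; [simpl; tauto|]. split; [lia|]. split; [exists 0%nat; lia|].
  split; [simpl; lia|]. intros (f&_&[]&_).
- destruct (chain_app_inv _ _ _ _ Hch) as [m [Hc1 Hc2]].
  unfold DomF, GeF in HD, HGe. apply Forall_app in HD as [HD1 HD2]. apply Forall_app in HGe as [HG1 HG2].
  destruct (sep_app_inv _ _ _ Hs) as [Hs1 Hs2].
  destruct (SS_app_inv _ _ _ HS) as (HS1&HS2&HS3).
  set (pG := dpos Tk (hd dfront G) Tk1) in *.
  assert (HhdG : In (hd dfront G) G) by (destruct G; [tauto|left; reflexivity]).
  assert (Hgt : forall g, In g rest -> pG < dpos Tk g Tk1).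
  { intros g Hg. destruct rest as [|r0 rest']; [destruct Hg|].
    assert (Hr0 : pG < dpos Tk r0 Tk1).
    { pose proof (HS3 _ r0 HhdG ltac:(left; reflexivity)). simpl in H0. unfold pG in *. lra. }
    destruct Hg as [<-|Hg]; auto. apply StronglySorted_inv in HS2 as [_ HF].
    rewrite Forall_forall in HF. specialize (HF g Hg). simpl in HF. lra. }
  destruct (group_lemma M n Tk Tk1 G out a m H HG Hc1 HD1 HG1 Hs1 Hgo) as (O1&O2&O3&O4&O5&O6&O7&O8).
  destruct (IH m b Hc2 HD2 HG2 Hs2 HS2) as (R1&R2&R3&R4&R5&R6&R7&R8).
  rewrite !countPT_app.
  split; [eapply chain_app; eauto|].
  split; [apply Forall_app; auto|].
  split; [apply Forall_app; auto|].
  split.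
  { apply sep_app; auto. apply count_le1_sep; auto.
    intros f g Hf Hg. rewrite (O5 f Hf). destruct (R5 g Hg) as [h [Hh ->]].
    specialize (Hgt h Hh). fold pG. lra. }
  split.
  { intros f' Hf'. apply in_app_or in Hf' as [Hf'|Hf'].
    - exists (hd dfront G). split; [apply in_or_app; auto|]. apply O5; auto.
    - destruct (R5 f' Hf') as [g [Hg Hx]]. exists g. split; auto. apply in_or_app; auto. }
  split; [lia|].
  split; [destruct O7 as [m1 ?]; destruct R7 as [m2 ?]; exists (m1 + m2)%nat; lia|].
  split.
  + intros Hlt.
    destruct (Nat.lt_ge_cases (countPT M out) (countPT M G)) as [Hl|Hl].
    * destruct (proj1 O8 Hl) as (f&g&Hf&Hg&Pf&Pg&Hne).
      exists f, g. split; [apply in_or_app; auto|]. split; [apply in_or_app; auto|].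
      repeat split; auto. rewrite (Hpos f Hf), (Hpos g Hg). reflexivity.
    * destruct (proj1 R8 ltac:(lia)) as (f&g&Hf&Hg&Pf&Pg&Hne&Hp).
      exists f, g. split; [apply in_or_app; auto|]. split; [apply in_or_app; auto|]. auto.
  + intros (f&g&Hf&Hg&Pf&Pg&Hne&Hp).
    apply in_app_or in Hf as [Hf|Hf]; apply in_app_or in Hg as [Hg|Hg].
    * assert (countPT M out < countPT M G)%nat by (apply O8; exists f, g; repeat split; auto). lia.
    * exfalso. specialize (Hgt g Hg). rewrite (Hpos f Hf) in Hp. fold pG in Hp. lra.
    * exfalso. specialize (Hgt f Hf). rewrite (Hpos g Hg) in Hp. fold pG in Hp. lra.
    * assert (countPT M out' < countPT M rest)%nat by (apply R8; exists f, g; repeat split; auto). lia.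
Qed.

Lemma nth_sorted {A} (Rl : A -> A -> Prop) d l :
  (forall i, (S i < length l)%nat -> Rl (nth i l d) (nth (S i) l d)) -> Sorted Rl l.
Proof.
induction l as [|x l IH]; intros H; constructor.
- apply IH. intros i Hi. apply (H (S i)). simpl; lia.
- destruct l; constructor. apply (H 0%nat). simpl; lia.
Qed.

Lemma init_lemma M n a js C : Hyps M -> init_rel M n a js C -> dom M a ->
  (forall y u, In (y, u) js -> dom M u) ->
  StronglySorted (fun p q => fst p < fst q) js ->
  (exists b, chainP a C b) /\ DomF M C /\ GeF M C /\ sep M C /\
  countPT M C = countPT_ubar M a js /\ (forall f, In f C -> exists u, In (fx f, u) js).
Proof.
intros H Hi. induction Hi as [a|a y b js L C0 HRS Hi IH]; intros Ha Hjs HS.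
- split; [exists a; constructor|]. split; [constructor|]. split; [constructor|]. simpl. tauto.
- apply StronglySorted_inv in HS as [HS HF]. rewrite Forall_forall in HF.
  assert (Hb : dom M b) by (apply (Hjs y); left; reflexivity).
  destruct (IH Hb (fun y' u Hu => Hjs y' u (or_intror Hu)) HS) as ([b' Hch]&D&G&Sp&Cn&Fx).
  destruct (RS_ok M n y a b L H HRS) as (C1&C2&C3&C4).
  split; [exists b'; eapply chain_app; eauto|].
  split; [apply Forall_app; auto|]. split; [apply Forall_app; auto|].
  split.
  { apply sep_app; auto. apply count_le1_sep. rewrite C4. apply PTind_le1.
    intros f g Hf Hg. rewrite (fan_fx _ _ _ _ Hf). destruct (Fx g Hg) as [u Hu].
    specialize (HF _ Hu). simpl in HF. lra. }
  split; [rewrite countPT_app, C4, Cn; reflexivity|].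
  intros f Hf. apply in_app_or in Hf as [Hf|Hf].
  + rewrite (fan_fx _ _ _ _ Hf). exists b. left; reflexivity.
  + destruct (Fx f Hf) as [u Hu]. exists u. right; auto.
Qed.

Lemma PI_iff M Tk Tk1 C : PI M Tk Tk1 C <-> PT_interact M Tk C Tk1.
Proof.
split.
- intros (f&g&Hf&Hg&Pf&Pg&Hne&Hp).
  destruct (In_nth C f dfront Hf) as [i [Hi Ei]]. destruct (In_nth C g dfront Hg) as [j [Hj Ej]].
  destruct (Nat.lt_total i j) as [Hij|[Hij|Hij]].
  + exists i, j. subst. repeat split; auto.
  + subst. tauto.
  + exists j, i. subst. repeat split; auto.
- intros (i&j&Hij&Hj&Pi&Pj&Hne&Hp). exists (nth i C dfront), (nth j C dfront).
  split; [apply nth_In; lia|]. split; [apply nth_In; lia|]. repeat split; auto.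
Qed.

Theorem lemma2
  (M : Model) (dvf ddvf dp ddp : R -> R) (Rmax_ : R)
  (* standing assumptions on v_f *)
  (HR2 : 0 < Rf2 M)
  (Hvf_d1 : deriv_in (fun r => 0 <= r <= Rf2 M) (vf M) dvf)
  (Hvf_d2 : deriv_in (fun r => 0 <= r <= Rf2 M) dvf ddvf)
  (Hvf_c2 : cont_in (fun r => 0 <= r <= Rf2 M) ddvf)
  (Hvf_pos : forall r, 0 <= r <= Rf2 M -> 0 <= vf M r)
  (Hvf_end : 0 < vf M (Rf2 M))
  (Hvf1 : forall r, 0 <= r <= Rf2 M -> dvf r <= 0)
  (Hvf2 : forall r, 0 <= r <= Rf2 M -> vf M r + r * dvf r > 0)
  (Hvf3 : forall r, 0 <= r <= Rf2 M -> 2 * dvf r + r * ddvf r <= 0)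
  (* standing assumptions on p *)
  (HR1 : 0 < Rf1 M < Rf2 M)
  (Hp_d1 : deriv_in (fun r => Rf1 M <= r) (pp M) dp)
  (Hp_d2 : deriv_in (fun r => Rf1 M <= r) dp ddp)
  (Hp_c2 : cont_in (fun r => Rf1 M <= r) ddp)
  (Hp1 : forall r, Rf1 M <= r -> dp r > 0)
  (Hp2 : forall r, Rf1 M <= r -> 2 * dp r + r * ddp r > 0)
  (Hincr : forall r s, Rf1 M <= r -> r < s -> s <= Rf2 M ->
             vf M r + pp M r < vf M s + pp M s)
  (Hvfp : forall r, Rf1 M <= r <= Rf2 M -> vf M r < r * dp r)
  (* R_max = p^{-1}(W_max) is well defined *)
  (HRmax : Rf1 M <= Rmax_ /\ pp M Rmax_ = Wmax M)
  (HVc : 0 < Vc M < Vfl M)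
  (* the data of the construction *)
  (n : nat) (u0 : state) (js : list (R * state))
  (Hubar : ubar_ok M n u0 js)
  (K : nat) (T : nat -> R) (C : nat -> list front)
  (Hrun : wft_run M n u0 js K T C) :
  (* every phase transition present at any time t > 0 belongs to G_e *)
  (forall k, (k <= K)%nat -> forall f, In f (C k) ->
     isPT M (fa f) (fb f) -> inGe M (fa f) (fb f)) /\
  (* at t = 0 no interaction takes place: the number neither increases
     nor decreases when passing from u^n(0) = ubar to t > 0 *)
  countPT M (C 0%nat) = countPT_ubar M u0 js /\
  (* no increase at interaction times *)
  (forall k, (k < K)%nat -> (countPT M (C (S k)) <= countPT M (C k))%nat) /\
  (* strict decrease iff two phase transitions interact *)
  (forall k, (k < K)%nat ->
     ((countPT M (C (S k)) < countPT M (C k))%nat <->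
      PT_interact M (T k) (C k) (T (S k)))) /\
  (* decrease only by an even number *)
  (forall k, (k < K)%nat ->
     Nat.Even (countPT M (C k) - countPT M (C (S k)))).
Proof.
assert (H : Hyps M).
{ split; [auto|]. split; [auto|]. split; [auto|].
  intros x y Hx Hxy Hy. apply (mono_deriv 0 (Rf2 M) (vf M) dvf Hvf_d1 Hvf1); auto. }
destruct Hubar as (Hu0&Hjs&Hsort).
destruct Hrun as (HT0&Hinit&Hsteps).
assert (Hdu0 : dom M u0) by (apply Hu0).
assert (Hdjs : forall y u, In (y, u) js -> dom M u) by (intros y u Hy; apply (Hjs y u Hy)).
assert (HSS : StronglySorted (fun p q : R * state => fst p < fst q) js).
{ apply Sorted_StronglySorted. intros x y z; simpl; lra. apply (nth_sorted _ (0, u0)). exact Hsort. }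
destruct (init_lemma M n u0 js (C 0%nat) H Hinit Hdu0 Hdjs HSS) as (I1&I2&I3&I4&I5&_).
assert (Hsorted : forall k, (k < K)%nat ->
  StronglySorted (fun f g => dpos (T k) f (T (S k)) <= dpos (T k) g (T (S k))) (C k)).
{ intros k Hk. destruct (Hsteps k Hk) as (Hlt&Hle&_).
  apply Sorted_StronglySorted. intros x y z; simpl; lra.
  apply (nth_sorted _ dfront). intros i Hi. apply Hle; auto. lra. }
assert (Inv : forall k, (k <= K)%nat ->
  (exists b, chainP u0 (C k) b) /\ DomF M (C k) /\ GeF M (C k) /\ sep M (C k)).
{ induction k as [|k IHk]; intros Hk.
  - split; auto.
  - destruct (IHk ltac:(lia)) as ([b Hb]&D&G&Sp).
    destruct (Hsteps k ltac:(lia)) as (_&_&_&_&Hres).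
    destruct (resolve_lemma M n _ _ _ _ H Hres u0 b Hb D G Sp (Hsorted k ltac:(lia)))
      as (R1&R2&R3&R4&_).
    split; [exists b; auto|]. auto. }
assert (Step : forall k, (k < K)%nat ->
  (countPT M (C (S k)) <= countPT M (C k))%nat /\
  (exists m, countPT M (C k) = countPT M (C (S k)) + 2 * m)%nat /\
  ((countPT M (C (S k)) < countPT M (C k))%nat <-> PI M (T k) (T (S k)) (C k))).
{ intros k Hk. destruct (Inv k ltac:(lia)) as ([b Hb]&D&G&Sp).
  destruct (Hsteps k Hk) as (_&_&_&_&Hres).
  destruct (resolve_lemma M n _ _ _ _ H Hres u0 b Hb D G Sp (Hsorted k Hk))
      as (_&_&_&_&_&R6&R7&R8). auto. }
split.
{ intros k Hk f Hf. destruct (Inv k Hk) as (_&_&G&_). unfold GeF in G.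
  rewrite Forall_forall in G. apply G; auto. }
split; [exact I5|].
split; [intros k Hk; apply Step; auto|].
split.
{ intros k Hk. rewrite <- PI_iff. apply Step; auto. }
intros k Hk. destruct (Step k Hk) as (_&[m Hm]&_). exists m. lia.
Qed.
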